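(* Let $k:(0,\infty)\to(0,\infty)$ be such that $1/k$ is a standard operator monotone function, and let $\rho,\sigma\in M_n(\mathbb C)$ be density matrices with $\sigma$ positive definite. Then $$\|\rho-\sigma\|_1^2\le\chi^2_k(\rho,\sigma).$$
   Context: A function $g:(0,\infty)\to(0,\infty)$ is standard operator monotone if it is operator monotone, $xg(x^{-1})=g(x)$ and $g(1)=1$. For positive definite $\sigma$, $\mathbb L_\sigma X=\sigma X$, $\mathbb R_\sigma X=X\sigma$, $\mathbb J^g_\sigma=g(\mathbb L_\sigma\mathbb R_\sigma^{-1})\mathbb R_\sigma$ on $M_n(\mathbb C)$ with inner product $\langle B,C\rangle=\mathrm{Tr}\,B^*C$. The $\chi^2$-divergence is $\chi^2_k(\rho,\sigma)=\langle\rho-\sigma,(\mathbb J^{1/k}_\sigma)^{-1}(\rho-\sigma)\rangle$. $\|X\|_1=\mathrm{Tr}\,|X|$ is the trace norm. *)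

(* Defs.v *)
From Stdlib Require Import Reals Lra Arith.
Open Scope R_scope.

Record C := mkC { Cre : R ; Cim : R }.
Definition C0 : C := mkC 0 0.
Definition C1 : C := mkC 1 0.
Definition RtoC (r : R) : C := mkC r 0.
Definition Cadd (a b : C) : C := mkC (Cre a + Cre b) (Cim a + Cim b).
Definition Copp (a : C) : C := mkC (- Cre a) (- Cim a).
Definition Cmul (a b : C) : C :=
  mkC (Cre a * Cre b - Cim a * Cim b) (Cre a * Cim b + Cim a * Cre b).
Definition Cconj (a : C) : C := mkC (Cre a) (- Cim a).
Definition Cnorm2 (a : C) : R := Cre a * Cre a + Cim a * Cim a.

Fixpoint csum (n : nat) (f : nat -> C) : C :=
  match n with O => C0 | S m => Cadd (csum m f) (f m) end.

(** n x n complex matrices: only entries with indices < n are meaningful. *)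
Definition Mat := nat -> nat -> C.
Definition mmul (n : nat) (A B : Mat) : Mat :=
  fun i j => csum n (fun l => Cmul (A i l) (B l j)).
Definition adj (A : Mat) : Mat := fun i j => Cconj (A j i).
Definition msub (A B : Mat) : Mat := fun i j => Cadd (A i j) (Copp (B i j)).
Definition idm : Mat := fun i j => if Nat.eqb i j then C1 else C0.
Definition diagm (d : nat -> R) : Mat :=
  fun i j => if Nat.eqb i j then RtoC (d i) else C0.
Definition trace (n : nat) (A : Mat) : C := csum n (fun i => A i i).
Definition hs_inner (n : nat) (B D : Mat) : C := trace n (mmul n (adj B) D).

Definition Meq (n : nat) (A B : Mat) : Prop :=
  forall i j, (i < n)%nat -> (j < n)%nat -> A i j = B i j.
Definition hermitian (n : nat) (A : Mat) : Prop := Meq n A (adj A).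
Definition unitary (n : nat) (U : Mat) : Prop := Meq n (mmul n (adj U) U) idm.
Definition qform (n : nat) (A : Mat) (x : nat -> C) : C :=
  csum n (fun i => csum n (fun j => Cmul (Cmul (Cconj (x i)) (A i j)) (x j))).
Definition psd (n : nat) (A : Mat) : Prop :=
  hermitian n A /\ forall x : nat -> C, 0 <= Cre (qform n A x).
Definition posdef (n : nat) (A : Mat) : Prop :=
  hermitian n A /\
  forall x : nat -> C, (exists i, (i < n)%nat /\ x i <> C0) -> 0 < Cre (qform n A x).
Definition density (n : nat) (A : Mat) : Prop := psd n A /\ trace n A = C1.
Definition loewner_le (n : nat) (A B : Mat) : Prop := psd n (msub B A).

Definition spectral (n : nat) (A U : Mat) (d : nat -> R) : Prop :=
  unitary n U /\ Meq n A (mmul n (mmul n U (diagm d)) (adj U)).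
(** Functional calculus f(A) = U diag(f d) U^* for A = U diag(d) U^*. *)
Definition mfun (n : nat) (f : R -> R) (U : Mat) (d : nat -> R) : Mat :=
  mmul n (mmul n U (diagm (fun i => f (d i)))) (adj U).

Definition op_monotone (g : R -> R) : Prop :=
  forall (m : nat) (A B U V : Mat) (a b : nat -> R),
    spectral m A U a -> spectral m B V b ->
    (forall i, (i < m)%nat -> 0 < a i) -> (forall i, (i < m)%nat -> 0 < b i) ->
    loewner_le m A B -> loewner_le m (mfun m g U a) (mfun m g V b).

Definition standard_op_monotone (g : R -> R) : Prop :=
  (forall x, 0 < x -> 0 < g x) /\ op_monotone g /\
  (forall x, 0 < x -> x * g (/ x) = g x) /\ g 1 = 1.

(** Trace norm ||X||_1 = Tr |X| = Tr sqrt(X^* X), computed through a spectral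
    decomposition X^* X = W diag(mu) W^*. *)
Definition trace_norm_via (n : nat) (W : Mat) (mu : nat -> R) : R :=
  Cre (trace n (mfun n sqrt W mu)).

(** With sigma = U diag(lam) U^*, the
    matrices U E_ij U^* form an orthonormal eigenbasis (Hilbert-Schmidt) of the
    commuting positive superoperators L_sigma R_sigma^{-1} (eigenvalue
    lam_i/lam_j) and R_sigma (eigenvalue lam_j).  Hence a superoperator function
    F(L R^{-1}, R) acts as X |-> U [ F(lam_i/lam_j, lam_j) (U^* X U)_ij ] U^*. *)
Definition superop_fun (n : nat) (U : Mat) (mu : nat -> nat -> R) (X : Mat) : Mat :=
  let Y := mmul n (mmul n (adj U) X) U in
  mmul n (mmul n U (fun i j => Cmul (RtoC (mu i j)) (Y i j))) (adj U).

(** J^g_sigma = g(L R^{-1}) R *)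
Definition Jop (n : nat) (g : R -> R) (U : Mat) (lam : nat -> R) : Mat -> Mat :=
  superop_fun n U (fun i j => g (lam i / lam j) * lam j).
Definition Jop_inv (n : nat) (g : R -> R) (U : Mat) (lam : nat -> R) : Mat -> Mat :=
  superop_fun n U (fun i j => / (g (lam i / lam j) * lam j)).

Definition chi2 (n : nat) (k : R -> R) (U : Mat) (lam : nat -> R) (rho sigma : Mat) : C :=
  hs_inner n (msub rho sigma) (Jop_inv n (fun x => / k x) U lam (msub rho sigma)).

(* Main.v *)
Require Import Defs.
From Stdlib Require Import Reals Lra Lia Psatz Arith Setoid Morphisms Ring.
Notation CC := Defs.C.
Notation CZ := Defs.C0.
Notation CO := Defs.C1.
Open Scope R_scope.

Definition Csub (a b : CC) := Cadd a (Copp b).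
Lemma Ceq (a b : CC) : Cre a = Cre b -> Cim a = Cim b -> a = b.
Proof. destruct a, b; simpl; intros; subst; reflexivity. Qed.

Lemma Cring_th : ring_theory CZ CO Cadd Cmul Csub Copp (@eq CC).
Proof.
  constructor; intros; apply Ceq; destruct x; try destruct y; try destruct z;
  unfold Cadd, Cmul, Csub, Copp, Defs.C0, Defs.C1; simpl; ring.
Qed.
Add Ring Cring : Cring_th.

Lemma Cconj_add a b : Cconj (Cadd a b) = Cadd (Cconj a) (Cconj b).
Proof. apply Ceq; simpl; ring. Qed.
Lemma Cconj_mul a b : Cconj (Cmul a b) = Cmul (Cconj a) (Cconj b).
Proof. apply Ceq; simpl; ring. Qed.
Lemma Cconj_conj a : Cconj (Cconj a) = a.
Proof. apply Ceq; simpl; ring. Qed.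
Lemma Cconj_opp a : Cconj (Copp a) = Copp (Cconj a).
Proof. apply Ceq; simpl; ring. Qed.
Lemma Cconj_0 : Cconj CZ = CZ.
Proof. apply Ceq; simpl; ring. Qed.
Lemma Cconj_RtoC r : Cconj (RtoC r) = RtoC r.
Proof. apply Ceq; simpl; ring. Qed.

Fixpoint rsum (n : nat) (f : nat -> R) : R :=
  match n with O => 0 | S m => rsum m f + f m end.

Lemma csum_ext n f g : (forall i, (i < n)%nat -> f i = g i) -> csum n f = csum n g.
Proof. induction n; simpl; intros H; auto. rewrite IHn, H; auto. Qed.
Lemma rsum_ext n f g : (forall i, (i < n)%nat -> f i = g i) -> rsum n f = rsum n g.
Proof. induction n; simpl; intros H; auto. rewrite IHn, H; auto. Qed.
Lemma csum_add n f g : csum n (fun i => Cadd (f i) (g i)) = Cadd (csum n f) (csum n g).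
Proof. induction n; simpl. apply Ceq; simpl; ring. rewrite IHn. ring. Qed.
Lemma csum_mul_l n c f : Cmul c (csum n f) = csum n (fun i => Cmul c (f i)).
Proof. induction n; simpl. apply Ceq; simpl; ring. rewrite <- IHn. ring. Qed.
Lemma csum_mul_r n c f : Cmul (csum n f) c = csum n (fun i => Cmul (f i) c).
Proof. induction n; simpl. apply Ceq; simpl; ring. rewrite <- IHn. ring. Qed.
Lemma csum_conj n f : Cconj (csum n f) = csum n (fun i => Cconj (f i)).
Proof. induction n; simpl. apply Cconj_0. rewrite Cconj_add, IHn. reflexivity. Qed.
Lemma csum_zero n : csum n (fun _ => CZ) = CZ.
Proof. induction n; simpl; auto. rewrite IHn. ring. Qed.
Lemma csum_swap n m f :
  csum n (fun i => csum m (fun j => f i j)) = csum m (fun j => csum n (fun i => f i j)).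
Proof.
  induction n; simpl. rewrite csum_zero; auto.
  rewrite IHn, <- csum_add. reflexivity.
Qed.
Lemma Cre_csum n f : Cre (csum n f) = rsum n (fun i => Cre (f i)).
Proof. induction n; simpl; auto. rewrite IHn; auto. Qed.
Lemma Cim_csum n f : Cim (csum n f) = rsum n (fun i => Cim (f i)).
Proof. induction n; simpl; auto. rewrite IHn; auto. Qed.
Lemma rsum_add n f g : rsum n (fun i => f i + g i) = rsum n f + rsum n g.
Proof. induction n; simpl. ring. rewrite IHn. ring. Qed.
Lemma rsum_scal n c f : rsum n (fun i => c * f i) = c * rsum n f.
Proof. induction n; simpl. ring. rewrite IHn. ring. Qed.
Lemma rsum_le n f g : (forall i, (i < n)%nat -> f i <= g i) -> rsum n f <= rsum n g.
Proof. induction n; simpl; intros H. lra. assert (f n <= g n) by auto.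
  assert (rsum n f <= rsum n g) by auto. lra. Qed.
Lemma rsum_swap n m f :
  rsum n (fun i => rsum m (fun j => f i j)) = rsum m (fun j => rsum n (fun i => f i j)).
Proof.
  induction n; simpl. induction m; simpl; lra.
  rewrite IHn, <- rsum_add. reflexivity.
Qed.
Lemma rsum_const n c : rsum n (fun _ => c) = INR n * c.
Proof. induction n. simpl; ring. change (rsum (S n) (fun _ => c)) with (rsum n (fun _ => c) + c). rewrite IHn, S_INR. ring. Qed.
Lemma rsum_nonneg n f : (forall i, (i < n)%nat -> 0 <= f i) -> 0 <= rsum n f.
Proof. intros H. replace 0 with (rsum n (fun _ => 0)). apply rsum_le; auto.
  rewrite rsum_const; ring. Qed.

Lemma csum_delta_l n i f : (i < n)%nat ->
  csum n (fun l => if Nat.eqb i l then f l else CZ) = f i.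
Proof.
  induction n; intros Hi. lia. simpl.
  destruct (Nat.eqb i n) eqn:E.
  - apply Nat.eqb_eq in E; subst.
    rewrite (csum_ext _ _ (fun _ => CZ)). rewrite csum_zero; ring.
    intros l Hl. destruct (Nat.eqb n l) eqn:E2; auto. apply Nat.eqb_eq in E2; lia.
  - apply Nat.eqb_neq in E. rewrite IHn by lia. ring.
Qed.

Lemma Meq_refl n A : Meq n A A. Proof. intros i j _ _; reflexivity. Qed.
Lemma Meq_sym n A B : Meq n A B -> Meq n B A. Proof. intros H i j Hi Hj; symmetry; auto. Qed.
Lemma Meq_trans n A B D : Meq n A B -> Meq n B D -> Meq n A D.
Proof. intros H1 H2 i j Hi Hj; rewrite H1; auto. Qed.
Add Parametric Relation n : Mat (Meq n)
  reflexivity proved by (Meq_refl n) symmetry proved by (Meq_sym n)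
  transitivity proved by (Meq_trans n) as Meq_rel.

Add Parametric Morphism n : (mmul n) with signature Meq n ==> Meq n ==> Meq n as mmul_mor.
Proof. intros A A' HA B B' HB i j Hi Hj. unfold mmul. apply csum_ext; intros l Hl.
  rewrite HA, HB; auto. Qed.
Add Parametric Morphism n : (@adj) with signature Meq n ==> Meq n as adj_mor.
Proof. intros A A' HA i j Hi Hj. unfold adj. rewrite HA; auto. Qed.
Add Parametric Morphism n : (trace n) with signature Meq n ==> eq as trace_mor.
Proof. intros A A' HA. unfold trace. apply csum_ext; intros; auto. Qed.
Add Parametric Morphism n : (msub) with signature Meq n ==> Meq n ==> Meq n as msub_mor.
Proof. intros A A' HA B B' HB i j Hi Hj. unfold msub. rewrite HA, HB; auto. Qed.

Lemma mmul_assoc n A B D : Meq n (mmul n (mmul n A B) D) (mmul n A (mmul n B D)).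
Proof.
  intros i j _ _. unfold mmul.
  transitivity (csum n (fun l => csum n (fun m => Cmul (Cmul (A i m) (B m l)) (D l j)))).
  apply csum_ext; intros; apply csum_mul_r.
  rewrite csum_swap. apply csum_ext; intros m _. rewrite csum_mul_l.
  apply csum_ext; intros; ring.
Qed.
Lemma adj_mmul n A B : Meq n (adj (mmul n A B)) (mmul n (adj B) (adj A)).
Proof. intros i j _ _. unfold adj, mmul. rewrite csum_conj. apply csum_ext; intros.
  rewrite Cconj_mul. ring. Qed.
Lemma adj_adj n A : Meq n (adj (adj A)) A.
Proof. intros i j _ _. unfold adj. apply Cconj_conj. Qed.
Lemma trace_comm n A B : trace n (mmul n A B) = trace n (mmul n B A).
Proof. unfold trace, mmul. rewrite csum_swap. apply csum_ext; intros; apply csum_ext; intros; ring. Qed.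
Lemma mmul_idm_l n A : Meq n (mmul n idm A) A.
Proof. intros i j Hi _. unfold mmul, idm.
  rewrite <- (csum_delta_l n i (fun l => A l j)) by auto.
  apply csum_ext; intros l _. destruct (Nat.eqb i l); unfold Defs.C1, Defs.C0; apply Ceq; simpl; ring. Qed.
Lemma mmul_idm_r n A : Meq n (mmul n A idm) A.
Proof. intros i j _ Hj. unfold mmul, idm.
  rewrite <- (csum_delta_l n j (fun l => A i l)) by auto.
  apply csum_ext; intros l _. rewrite (Nat.eqb_sym l j).
  destruct (Nat.eqb j l); unfold Defs.C1, Defs.C0; apply Ceq; simpl; ring. Qed.
Lemma mmul_diag_r n A d : Meq n (mmul n A (diagm d)) (fun i j => Cmul (A i j) (RtoC (d j))).
Proof. intros i j _ Hj. unfold mmul, diagm.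
  rewrite <- (csum_delta_l n j (fun l => Cmul (A i l) (RtoC (d l)))) by auto.
  apply csum_ext; intros l _. rewrite (Nat.eqb_sym l j).
  destruct (Nat.eqb j l); auto. apply Ceq; simpl; ring. Qed.
Lemma mmul_diag_l n A d : Meq n (mmul n (diagm d) A) (fun i j => Cmul (RtoC (d i)) (A i j)).
Proof. intros i j Hi _. unfold mmul, diagm.
  rewrite <- (csum_delta_l n i (fun l => Cmul (RtoC (d i)) (A l j))) by auto.
  apply csum_ext; intros l _.
  destruct (Nat.eqb i l) eqn:E; auto.
  apply Ceq; simpl; ring. Qed.
Lemma adj_diag n d : Meq n (adj (diagm d)) (diagm d).
Proof. intros i j _ _. unfold adj, diagm. rewrite Nat.eqb_sym.
  destruct (Nat.eqb i j) eqn:E; [apply Nat.eqb_eq in E; subst|]; apply Ceq; simpl; ring. Qed.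
Lemma trace_diag n d : trace n (diagm d) = RtoC (rsum n d).
Proof. unfold trace, diagm. induction n; simpl. reflexivity.
  rewrite Nat.eqb_refl, IHn. apply Ceq; simpl; ring. Qed.

Lemma rsum_ge_term n f i : (forall l, (l < n)%nat -> 0 <= f l) -> (i < n)%nat -> f i <= rsum n f.
Proof.
  induction n; intros H Hi. lia. simpl.
  destruct (Nat.eq_dec i n). subst. assert (0 <= rsum n f) by (apply rsum_nonneg; auto). lra.
  assert (f i <= rsum n f) by (apply IHn; auto; lia). assert (0 <= f n) by auto. lra.
Qed.
Lemma rsum_two n f i l : (forall m, (m < n)%nat -> 0 <= f m) -> (i < n)%nat -> (l < n)%nat -> i <> l ->
  f i + f l <= rsum n f.
Proof.
  induction n; intros H Hi Hl Hil. lia. simpl.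
  assert (0 <= f n) by auto.
  destruct (Nat.eq_dec i n). subst. assert (f l <= rsum n f) by (apply rsum_ge_term; auto; lia). lra.
  destruct (Nat.eq_dec l n). subst. assert (f i <= rsum n f) by (apply rsum_ge_term; auto; lia). lra.
  assert (f i + f l <= rsum n f) by (apply IHn; auto; lia). lra.
Qed.
Lemma rsum_all1 n f : (forall i, (i < n)%nat -> f i <= 1) -> INR n <= rsum n f ->
  forall i, (i < n)%nat -> f i = 1.
Proof.
  induction n; intros H Hs i Hi. lia.
  assert (rsum n f <= INR n).
  { replace (INR n) with (rsum n (fun _ => 1)). apply rsum_le; auto. rewrite rsum_const; ring. }
  change (rsum (S n) f) with (rsum n f + f n) in Hs. rewrite S_INR in Hs. assert (f n <= 1) by auto.
  destruct (Nat.eq_dec i n). subst; lra.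
  apply IHn; auto. lra. lia.
Qed.

Lemma Cnorm2_nonneg a : 0 <= Cnorm2 a.
Proof. unfold Cnorm2. nra. Qed.

Lemma herm_entry n P i l : hermitian n P -> (i < n)%nat -> (l < n)%nat -> P l i = Cconj (P i l).
Proof. intros H Hi Hl. rewrite H by auto. reflexivity. Qed.

Lemma proj_diag n P : hermitian n P -> Meq n (mmul n P P) P -> forall i, (i < n)%nat ->
  Cim (P i i) = 0 /\ Cre (P i i) = rsum n (fun l => Cnorm2 (P i l)).
Proof.
  intros Hh Hp i Hi. rewrite <- (Hp i i) by auto. unfold mmul.
  rewrite Cre_csum, Cim_csum. split.
  - rewrite (rsum_ext _ _ (fun _ => 0)). rewrite rsum_const; ring.
    intros l Hl. rewrite (herm_entry n P i l) by auto. simpl. ring.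
  - apply rsum_ext. intros l Hl. rewrite (herm_entry n P i l) by auto. unfold Cnorm2; simpl. ring.
Qed.

Lemma proj_le1 n P : hermitian n P -> Meq n (mmul n P P) P -> forall i, (i < n)%nat ->
  rsum n (fun l => Cnorm2 (P i l)) <= 1.
Proof.
  intros Hh Hp i Hi. destruct (proj_diag n P Hh Hp i Hi) as [Him Hre].
  assert (Cnorm2 (P i i) <= rsum n (fun l => Cnorm2 (P i l))).
  { apply (rsum_ge_term n (fun l => Cnorm2 (P i l))); auto. intros; apply Cnorm2_nonneg. }
  rewrite <- Hre in H |- *. unfold Cnorm2 in H. rewrite Him in H. nra.
Qed.

Lemma trace_idm n : Cre (trace n idm) = INR n.
Proof. unfold trace, idm. rewrite Cre_csum. rewrite (rsum_ext _ _ (fun _ => 1)).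
  rewrite rsum_const; ring. intros; rewrite Nat.eqb_refl; reflexivity. Qed.

Lemma Cnorm2_zero a : Cnorm2 a <= 0 -> a = CZ.
Proof. unfold Cnorm2. intros H. destruct a as [x y]; simpl in *. apply Ceq; simpl; nra. Qed.

Lemma herm_idem_id n P : hermitian n P -> Meq n (mmul n P P) P -> Cre (trace n P) = INR n ->
  Meq n P idm.
Proof.
  intros Hh Hp Ht.
  assert (H1 : forall i, (i < n)%nat -> Cre (P i i) = 1).
  { apply rsum_all1.
    - intros i Hi. destruct (proj_diag n P Hh Hp i Hi) as [_ ->]. apply proj_le1; auto.
    - unfold trace in Ht. rewrite Cre_csum in Ht. lra. }
  intros i l Hi Hl.
  destruct (proj_diag n P Hh Hp i Hi) as [Him Hre].
  rewrite H1 in Hre by auto. unfold idm.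
  destruct (Nat.eqb i l) eqn:E.
  - apply Nat.eqb_eq in E; subst. apply Ceq; simpl; auto.
  - apply Nat.eqb_neq in E. apply Cnorm2_zero.
    assert (Cnorm2 (P i i) + Cnorm2 (P i l) <= rsum n (fun l => Cnorm2 (P i l))).
    { apply (rsum_two n (fun l => Cnorm2 (P i l))); auto. intros; apply Cnorm2_nonneg. }
    unfold Cnorm2 at 1 in H. rewrite Him, H1 in H by auto. lra.
Qed.

Lemma unitary_right n U : unitary n U -> Meq n (mmul n U (adj U)) idm.
Proof.
  intros HU. unfold unitary in HU. apply herm_idem_id.
  - unfold hermitian. rewrite adj_mmul, adj_adj. reflexivity.
  - rewrite mmul_assoc. rewrite <- (mmul_assoc n (adj U) U (adj U)).
    unfold unitary in HU. rewrite HU, mmul_idm_l. reflexivity.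
  - rewrite trace_comm. rewrite HU. apply trace_idm.
Qed.

Add Parametric Morphism n : (qform n) with signature Meq n ==> eq ==> eq as qform_mor.
Proof. intros A A' HA x. unfold qform. apply csum_ext; intros i Hi; apply csum_ext; intros j Hj.
  rewrite HA; auto. Qed.
Lemma psd_Meq n A B : Meq n A B -> psd n A -> psd n B.
Proof. intros HAB [Hh Hq]. split.
  - unfold hermitian. rewrite <- HAB. auto.
  - intros x. rewrite <- HAB. auto. Qed.

Lemma qform_basis n M i : (i < n)%nat ->
  qform n M (fun l => if Nat.eqb i l then CO else CZ) = M i i.
Proof.
  intros Hi. unfold qform.
  rewrite <- (csum_delta_l n i (fun a => M a i)) by auto.
  apply csum_ext; intros a Ha.
  transitivity (Cmul (Cconj (if Nat.eqb i a then CO else CZ)) (M a i)).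
  - rewrite <- (csum_delta_l n i (fun b => Cmul (Cconj (if Nat.eqb i a then CO else CZ)) (M a b))) by auto.
    apply csum_ext; intros b _. destruct (Nat.eqb i b); apply Ceq; simpl; ring.
  - destruct (Nat.eqb i a) eqn:E; [apply Nat.eqb_eq in E; subst|]; apply Ceq; simpl; ring.
Qed.

Lemma psd_diag_nonneg n M i : psd n M -> (i < n)%nat -> 0 <= Cre (M i i).
Proof. intros [_ Hq] Hi. rewrite <- (qform_basis n M i Hi). apply Hq. Qed.

Lemma psd2 M al ga de : M 0%nat 0%nat = RtoC al -> M 1%nat 1%nat = RtoC ga ->
  M 0%nat 1%nat = RtoC de -> M 1%nat 0%nat = RtoC de -> 0 < al -> de * de <= al * ga -> psd 2 M.
Proof.
  intros H00 H11 H01 H10 Hal Hd. split.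
  - intros i j Hi Hj. unfold adj.
    destruct i as [|[|i]]; destruct j as [|[|j]]; try lia;
    rewrite ?H00, ?H11, ?H01, ?H10; apply Ceq; simpl; ring.
  - intros x. unfold qform. simpl. rewrite H00, H11, H01, H10. simpl.
    destruct (x 0%nat) as [a b]; destruct (x 1%nat) as [c d]; simpl.
    assert (Hcd : 0 <= c*c+d*d) by nra.
    assert (H3 : 0 <= (al * ga - de * de) * (c * c + d * d)) by (apply Rmult_le_pos; lra).
    assert (H4 : 0 <= (al * a + de * c)^2 + (al * b + de * d)^2) by (apply Rplus_le_le_0_compat; apply pow2_ge_0).
    assert (0 <= al * (al * (a * a + b * b) + ga * (c * c + d * d) + 2 * de * (a * c + b * d))).
    { replace (al * (al * (a * a + b * b) + ga * (c * c + d * d) + 2 * de * (a * c + b * d))) with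
       ((al * a + de * c)^2 + (al * b + de * d)^2 + (al * ga - de * de) * (c * c + d * d)) by ring. lra. }
    assert (0 <= al * (a * a + b * b) + ga * (c * c + d * d) + 2 * de * (a * c + b * d)).
    { apply (Rmult_le_reg_l al). lra. lra. }
    nra.
Qed.

Lemma unitary_idm m : unitary m idm.
Proof. unfold unitary. change (@idm) with (diagm (fun _ => 1)) at 1. rewrite adj_diag.
  apply mmul_idm_l. Qed.
Lemma spectral_diag m d : spectral m (diagm d) idm d.
Proof. split. apply unitary_idm. change (@idm) with (diagm (fun _ => 1)) at 2. rewrite adj_diag.
  change (diagm (fun _ => 1)) with idm. rewrite mmul_idm_l, mmul_idm_r. reflexivity. Qed.

Lemma opmon_scalar g : op_monotone g -> forall a b, 0 < a -> a <= b -> g a <= g b.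
Proof.
  intros Hg a b Ha Hab.
  pose proof (Hg 1%nat (diagm (fun _ => a)) (diagm (fun _ => b)) idm idm (fun _ => a) (fun _ => b)
    (spectral_diag _ _) (spectral_diag _ _) (fun _ _ => Ha) (fun _ _ => ltac:(lra))) as H.
  assert (Hl : loewner_le 1 (diagm (fun _ => a)) (diagm (fun _ => b))).
  { split.
    - intros i j Hi Hj. destruct i; [|lia]. destruct j; [|lia]. apply Ceq; simpl; ring.
    - intros x. unfold qform, msub, diagm; simpl. destruct (x 0%nat) as [u v]; simpl. nra. }
  specialize (H Hl). apply psd_diag_nonneg with (i := 0%nat) in H; [|lia].
  unfold mfun, msub, mmul, adj, diagm, idm in H. simpl in H. lra.
Qed.

Definition U2 (s s' : R) : Mat := fun i j =>
  match i, j with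
  | 0%nat, 0%nat => RtoC s | 0%nat, 1%nat => RtoC s' | 1%nat, 0%nat => RtoC s'
  | 1%nat, 1%nat => RtoC (- s) | _, _ => CZ end.
Definition d2 (p q : R) : nat -> R := fun i => match i with 0%nat => p | _ => q end.

Lemma unitary_U2 s s' : s * s + s' * s' = 1 -> unitary 2 (U2 s s').
Proof. intros H i j Hi Hj.
  destruct i as [|[|i]]; destruct j as [|[|j]]; try lia;
  apply Ceq; unfold mmul, adj, U2, idm; simpl; nra. Qed.

Lemma concave_pt g : op_monotone g -> forall s s' p q e,
  s * s + s' * s' = 1 -> 0 < p -> 0 < q -> 0 < e ->
  s * s * g p + s' * s' * g q <= g (s * s * p + s' * s' * q + e).
Proof.
  intros Hg s s' p q e Hs Hp Hq He.
  set (A := mmul 2 (mmul 2 (U2 s s') (diagm (d2 p q))) (adj (U2 s s'))).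
  set (de := s * s' * (p - q)).
  set (b := d2 (s * s * p + s' * s' * q + e) (s' * s' * p + s * s * q + de * de / e)).
  assert (HsA : spectral 2 A (U2 s s') (d2 p q)).
  { split. apply unitary_U2; auto. reflexivity. }
  assert (Hl : loewner_le 2 A (diagm b)).
  { apply (psd2 _ e (de * de / e) (- de)).
    all: try (apply Ceq; unfold msub, A, b, de, d2, diagm, mmul, adj, U2; simpl).
    all: try (field; lra). all: try ring.
    auto. apply Req_le. field. lra. }
  assert (Hpos : forall i, (i < 2)%nat -> 0 < b i).
  { intros i Hi. unfold b, d2. destruct i.
    - assert (0 <= s * s * p) by (apply Rmult_le_pos; nra). assert (0 <= s' * s' * q) by (apply Rmult_le_pos; nra). lra.
    - assert (0 <= de * de / e). { apply Rmult_le_pos. nra. left; apply Rinv_0_lt_compat; lra. }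
      assert (0 <= s * s * q) by (apply Rmult_le_pos; nra). assert (0 <= s' * s' * p) by (apply Rmult_le_pos; nra).
      assert (0 < s * s * q + s' * s' * p). { destruct (Rle_lt_dec (s*s) 0).
        assert (s' * s' = 1) by nra. nra. assert (0 < s*s*q) by (apply Rmult_lt_0_compat; lra). lra. }
      lra. }
  pose proof (Hg 2%nat A (diagm b) (U2 s s') idm (d2 p q) b HsA (spectral_diag _ _)
     (fun i _ => ltac:(destruct i; simpl; lra)) Hpos Hl) as H.
  apply psd_diag_nonneg with (i := 0%nat) in H; [|lia].
  unfold mfun, msub, mmul, adj, diagm, idm, U2, b, d2 in H. simpl in H. nra.
Qed.

Lemma key_ineq g : standard_op_monotone g -> forall x, 0 < x -> g x <= (1 + x) / 2.
Proof.
  intros [Hpos [Hmon [Hsym H1]]] x Hx.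
  set (L := 2 * g x / (x + 1)).
  assert (Hall : forall e, 0 < e -> L <= 1 + e).
  { intros e He.
    set (s := sqrt (x / (x + 1))). set (s' := sqrt (/ (x + 1))).
    assert (Hss : s * s = x / (x + 1)). { apply sqrt_sqrt. apply Rlt_le, Rdiv_lt_0_compat; lra. }
    assert (Hss' : s' * s' = / (x + 1)). { apply sqrt_sqrt. apply Rlt_le, Rinv_0_lt_compat; lra. }
    assert (Hs : s * s + s' * s' = 1). { rewrite Hss, Hss'. field. lra. }
    pose proof (concave_pt g Hmon s s' (/ x) x e Hs (Rinv_0_lt_compat _ Hx) Hx He) as Hc.
    rewrite Hss, Hss' in Hc.
    replace (x / (x + 1) * / x + / (x + 1) * x + e) with (1 + e) in Hc by (field; lra).
    assert (Hgx : g (/ x) = g x / x). { rewrite <- (Hsym x Hx). field. lra. }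
    rewrite Hgx in Hc.
    replace (x / (x + 1) * (g x / x) + / (x + 1) * g x) with L in Hc by (unfold L; field; lra).
    assert (Hge : g (1 + e) <= 1 + e).
    { rewrite <- (Hsym (1 + e)) by lra.
      assert (g (/ (1 + e)) <= g 1).
      { apply opmon_scalar; auto. apply Rinv_0_lt_compat; lra.
        rewrite <- Rinv_1. apply Rinv_le_contravar; lra. }
      rewrite H1 in H. nra. }
    lra. }
  assert (L <= 1).
  { destruct (Rle_lt_dec L 1); auto. specialize (Hall ((L - 1) / 2)). lra. }
  unfold L in H. apply (Rmult_le_compat_r ((x + 1) / 2)) in H; [|lra].
  replace (2 * g x / (x + 1) * ((x + 1) / 2)) with (g x) in H by (field; lra). lra.
Qed.

Lemma diagm_Meq n a b : (forall i, (i < n)%nat -> a i = b i) -> Meq n (diagm a) (diagm b).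
Proof. intros H i j Hi Hj. unfold diagm. rewrite H; auto. Qed.
Lemma diag_mul n a b : Meq n (mmul n (diagm a) (diagm b)) (diagm (fun i => a i * b i)).
Proof. rewrite mmul_diag_r. intros i j _ _. unfold diagm.
  destruct (Nat.eqb i j) eqn:E; [apply Nat.eqb_eq in E; subst|]; apply Ceq; simpl; ring. Qed.

Lemma herm_idem_conj n Q P : Meq n (mmul n (adj Q) Q) idm -> hermitian n P -> Meq n (mmul n P P) P ->
  hermitian n (mmul n (mmul n Q P) (adj Q)) /\
  Meq n (mmul n (mmul n (mmul n Q P) (adj Q)) (mmul n (mmul n Q P) (adj Q))) (mmul n (mmul n Q P) (adj Q)).
Proof.
  intros HQ Hh Hp. unfold hermitian in Hh. split.
  - unfold hermitian. rewrite adj_mmul, adj_adj, adj_mmul, <- Hh. rewrite mmul_assoc. reflexivity.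
  - rewrite !mmul_assoc. rewrite <- (mmul_assoc n (adj Q) Q).
    rewrite HQ, mmul_idm_l. rewrite <- (mmul_assoc n P P). rewrite Hp. reflexivity.
Qed.

Lemma diag_le1 n P i : hermitian n P -> Meq n (mmul n P P) P -> (i < n)%nat -> Cre (P i i) <= 1.
Proof. intros Hh Hp Hi. destruct (proj_diag n P Hh Hp i Hi) as [_ ->]. apply proj_le1; auto. Qed.

Lemma trace_spec n W d : unitary n W -> trace n (mmul n (mmul n W (diagm d)) (adj W)) = RtoC (rsum n d).
Proof. intros HW. rewrite trace_comm. rewrite <- mmul_assoc. unfold unitary in HW. rewrite HW, mmul_idm_l.
  apply trace_diag. Qed.

Lemma cs_pt (y t : CC) c : 0 < c -> 2 * Cre (Cmul y t) <= c * Cnorm2 t + Cnorm2 y / c.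
Proof.
  intros Hc. destruct y as [y1 y2], t as [t1 t2]. unfold Cnorm2; simpl.
  assert (0 <= (c * t1 - y1)^2 + (c * t2 + y2)^2) by (apply Rplus_le_le_0_compat; apply pow2_ge_0).
  assert (E : c * (c * (t1 * t1 + t2 * t2) + (y1 * y1 + y2 * y2) / c - 2 * (y1 * t1 - y2 * t2)) =
    (c * t1 - y1)^2 + (c * t2 + y2)^2) by (field; lra).
  assert (0 <= c * (t1 * t1 + t2 * t2) + (y1 * y1 + y2 * y2) / c - 2 * (y1 * t1 - y2 * t2)).
  { apply (Rmult_le_reg_l c). lra. lra. }
  lra.
Qed.

Lemma qform_col n A U a : qform n A (fun i => U i a) = mmul n (mmul n (adj U) A) U a a.
Proof. unfold qform, mmul, adj.
  transitivity (csum n (fun j => csum n (fun i => Cmul (Cmul (Cconj (U i a)) (A i j)) (U j a)))).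
  apply csum_swap. apply csum_ext; intros j _. rewrite csum_mul_r. reflexivity. Qed.

Lemma spec_conj n A U d : spectral n A U d -> Meq n (mmul n (mmul n (adj U) A) U) (diagm d).
Proof. intros [HU Hs]. unfold unitary in HU. rewrite Hs. rewrite !mmul_assoc. rewrite HU, mmul_idm_r.
  rewrite <- mmul_assoc, HU, mmul_idm_l. reflexivity. Qed.

Lemma lam_pos n sigma U lam : posdef n sigma -> spectral n sigma U lam -> forall a, (a < n)%nat -> 0 < lam a.
Proof.
  intros [_ Hpd] Hsp a Ha.
  assert (Hq : Cre (qform n sigma (fun i => U i a)) = lam a).
  { rewrite qform_col. rewrite (spec_conj n sigma U lam Hsp a a Ha Ha). unfold diagm.
    rewrite Nat.eqb_refl. reflexivity. }
  rewrite <- Hq. apply Hpd.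
  destruct (Classical_Prop.classic (exists i, (i < n)%nat /\ U i a <> CZ)) as [H|H]; auto.
  exfalso. destruct Hsp as [HU _].
  assert (Hz : mmul n (adj U) U a a = CZ).
  { unfold mmul. rewrite <- (csum_zero n). apply csum_ext; intros i Hi.
    destruct (Classical_Prop.classic (U i a = CZ)) as [E|E].
    unfold adj. rewrite E. apply Ceq; simpl; ring. exfalso; apply H; eauto. }
  rewrite HU in Hz by auto. unfold idm in Hz. rewrite Nat.eqb_refl in Hz.
  unfold Defs.C1 in Hz. injection Hz. lra.
Qed.

Lemma lam_sum n sigma U lam : trace n sigma = CO -> spectral n sigma U lam -> rsum n lam = 1.
Proof. intros Ht [HU Hs]. rewrite Hs, trace_spec in Ht by auto.
  unfold Defs.C1 in Ht. injection Ht. auto. Qed.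

Open Scope R_scope.
Theorem mainTheorem8 (n : nat) (k : R -> R) (rho sigma U W : Mat)
    (lam mu : nat -> R) :
  (forall x, 0 < x -> 0 < k x) ->
  standard_op_monotone (fun x => / k x) ->
  density n rho -> density n sigma -> posdef n sigma ->
  spectral n sigma U lam ->
  spectral n (mmul n (adj (msub rho sigma)) (msub rho sigma)) W mu ->
  Rsqr (trace_norm_via n W mu) <= Cre (chi2 n k U lam rho sigma).
Proof.
  intros Hk Hg [[Hrh _] Hrt] [[Hsh _] Hst] Hpd Hsp Hspw.
  pose proof Hsp as [HU HsU]. pose proof Hspw as [HW HXW].
  pose proof (unitary_right n U HU) as HUr.
  pose proof (lam_pos n sigma U lam Hpd Hsp) as Hlp.
  pose proof (lam_sum n sigma U lam Hst Hsp) as Hls.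
  unfold unitary in HU, HW.
  set (X := msub rho sigma) in *.
  set (Z := mmul n X W).
  assert (HZ : Meq n (mmul n (adj Z) Z) (diagm mu)).
  { rewrite <- (spec_conj n _ W mu Hspw). unfold Z. rewrite adj_mmul. rewrite !mmul_assoc. reflexivity. }
  set (c := fun i => if Rlt_dec 0 (mu i) then / sqrt (mu i) else 0).
  set (e := fun i => if Rlt_dec 0 (mu i) then 1 else 0).
  set (S := mmul n Z (diagm c)).
  assert (HSS : Meq n (mmul n (adj S) S) (diagm e)).
  { unfold S. rewrite adj_mmul, adj_diag. rewrite !mmul_assoc. rewrite <- (mmul_assoc n (adj Z) Z).
    rewrite HZ, !diag_mul. apply diagm_Meq. intros i _. unfold c, e.
    destruct (Rlt_dec 0 (mu i)); [|ring].
    assert (Hq : sqrt (mu i) * sqrt (mu i) = mu i) by (apply sqrt_sqrt; lra).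
    assert (sqrt (mu i) <> 0) by (apply Rgt_not_eq, sqrt_lt_R0; lra).
    rewrite <- Hq at 2. field; auto. }
  assert (HSe : Meq n (mmul n S (diagm e)) S).
  { unfold S. rewrite mmul_assoc, diag_mul. rewrite (diagm_Meq n _ c). reflexivity.
    intros i _. unfold c, e. destruct (Rlt_dec 0 (mu i)); ring. }
  assert (Htn : trace_norm_via n W mu = rsum n (fun i => sqrt (mu i))).
  { unfold trace_norm_via, mfun. rewrite trace_spec by auto. reflexivity. }
  assert (HR0 : Cre (trace n (mmul n (adj S) Z)) = rsum n (fun i => sqrt (mu i))).
  { unfold S. rewrite adj_mmul, adj_diag, mmul_assoc, HZ, diag_mul, trace_diag. simpl.
    apply rsum_ext. intros i _. unfold c. destruct (Rlt_dec 0 (mu i)).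
    assert (Hq : sqrt (mu i) * sqrt (mu i) = mu i) by (apply sqrt_sqrt; lra).
    assert (sqrt (mu i) <> 0) by (apply Rgt_not_eq, sqrt_lt_R0; lra).
    rewrite <- Hq at 2. field; auto. rewrite sqrt_neg_0; lra. }
  set (Y := mmul n (mmul n (adj U) X) U).
  set (G := mmul n (adj U) W).
  set (T := mmul n (mmul n G (adj S)) U).
  assert (Htr : trace n (mmul n (adj S) Z) = trace n (mmul n Y T)).
  { rewrite (trace_comm n Y T).
    assert (E1 : Meq n (mmul n T Y) (mmul n (adj U) (mmul n (mmul n W (mmul n (adj S) X)) U))).
    { unfold T, Y, G. rewrite !mmul_assoc. rewrite <- (mmul_assoc n U (adj U)), HUr, mmul_idm_l.
      reflexivity. }
    rewrite E1, (trace_comm n (adj U)).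
    assert (E2 : Meq n (mmul n (mmul n (mmul n W (mmul n (adj S) X)) U) (adj U)) (mmul n W (mmul n (adj S) X))).
    { rewrite mmul_assoc, HUr, mmul_idm_r. reflexivity. }
    rewrite E2, (trace_comm n W). unfold Z. rewrite mmul_assoc. reflexivity. }
  assert (HGG : Meq n (mmul n (adj G) G) idm).
  { unfold G. rewrite adj_mmul, adj_adj, !mmul_assoc. rewrite <- (mmul_assoc n U (adj U)), HUr, mmul_idm_l.
    exact HW. }
  assert (HTT : Meq n (mmul n T (adj T)) (mmul n (mmul n G (mmul n (adj S) S)) (adj G))).
  { unfold T. rewrite !adj_mmul, !adj_adj, !mmul_assoc.
    rewrite <- (mmul_assoc n U (adj U)), HUr, mmul_idm_l. reflexivity. }
  assert (HTT2 : Meq n (mmul n (adj T) T) (mmul n (mmul n (adj U) (mmul n S (adj S))) (adj (adj U)))).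
  { unfold T, G. rewrite !adj_mmul, !adj_adj, !mmul_assoc.
    rewrite <- (mmul_assoc n U (adj U)), HUr, mmul_idm_l.
    rewrite <- (mmul_assoc n (adj W) W), HW, mmul_idm_l. reflexivity. }
  assert (HP1 : hermitian n (mmul n (adj S) S) /\ Meq n (mmul n (mmul n (adj S) S) (mmul n (adj S) S)) (mmul n (adj S) S)).
  { split. unfold hermitian. rewrite HSS, adj_diag. reflexivity.
    rewrite HSS, diag_mul. apply diagm_Meq. intros i _. unfold e. destruct (Rlt_dec 0 (mu i)); ring. }
  assert (HP2 : hermitian n (mmul n S (adj S)) /\ Meq n (mmul n (mmul n S (adj S)) (mmul n S (adj S))) (mmul n S (adj S))).
  { split. unfold hermitian. rewrite adj_mmul, adj_adj. reflexivity.
    rewrite !mmul_assoc. rewrite <- (mmul_assoc n (adj S) S), HSS. rewrite <- (mmul_assoc n S (diagm e)), HSe.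
    reflexivity. }
  destruct HP1 as [HP1h HP1i]. destruct HP2 as [HP2h HP2i].
  destruct (herm_idem_conj n G _ HGG HP1h HP1i) as [HQ1h HQ1i].
  assert (HUU : Meq n (mmul n (adj (adj U)) (adj U)) idm) by (rewrite adj_adj; exact HUr).
  destruct (herm_idem_conj n (adj U) _ HUU HP2h HP2i) as [HQ2h HQ2i].
  unfold hermitian in HQ1h, HQ2h. rewrite <- HTT in HQ1h, HQ1i. rewrite <- HTT2 in HQ2h, HQ2i.
  assert (Hrow : forall b, (b < n)%nat -> rsum n (fun a => Cnorm2 (T b a)) <= 1).
  { intros b Hb. pose proof (diag_le1 n _ b HQ1h HQ1i Hb) as H.
    unfold mmul at 1 in H. rewrite Cre_csum in H. erewrite rsum_ext; [exact H|].
    intros a _. unfold adj, Cnorm2. simpl. ring. }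
  assert (Hcol : forall a, (a < n)%nat -> rsum n (fun b => Cnorm2 (T b a)) <= 1).
  { intros a Ha. pose proof (diag_le1 n _ a HQ2h HQ2i Ha) as H.
    unfold mmul at 1 in H. rewrite Cre_csum in H. erewrite rsum_ext; [exact H|].
    intros b _. unfold adj, Cnorm2. simpl. ring. }
  set (K := fun i j => / (/ k (lam i / lam j) * lam j)).
  set (M := fun i j => Cmul (RtoC (K i j)) (Y i j)).
  assert (Hchi : Cre (chi2 n k U lam rho sigma) = rsum n (fun a => rsum n (fun b => K a b * Cnorm2 (Y a b)))).
  { unfold chi2, hs_inner, Jop_inv, superop_fun. cbv zeta. fold X. fold Y. fold K. fold M.
    change (fun i j : nat => Cmul (RtoC (/ (/ k (lam i / lam j) * lam j))) (Y i j)) with M.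
    assert (E1 : Meq n (mmul n (adj X) (mmul n (mmul n U M) (adj U))) (mmul n (mmul n (mmul n (adj X) U) M) (adj U)))
      by (rewrite !mmul_assoc; reflexivity).
    rewrite E1, (trace_comm n _ (adj U)).
    assert (E2 : Meq n (mmul n (adj U) (mmul n (mmul n (adj X) U) M)) (mmul n (adj Y) M)).
    { unfold Y. rewrite !adj_mmul, !adj_adj, !mmul_assoc. reflexivity. }
    rewrite E2. unfold trace, mmul. rewrite Cre_csum. rewrite rsum_swap.
    apply rsum_ext; intros a _. rewrite Cre_csum. apply rsum_ext; intros b _.
    unfold M, adj, Cnorm2. simpl. ring. }
  assert (HK : forall a b, (a < n)%nat -> (b < n)%nat -> / ((lam a + lam b) / 2) <= K a b).
  { intros a b Ha Hb. pose proof (Hlp a Ha). pose proof (Hlp b Hb).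
    assert (Hx : 0 < lam a / lam b) by (apply Rdiv_lt_0_compat; lra).
    pose proof (key_ineq _ Hg _ Hx) as H1. pose proof (Hk _ Hx) as H2.
    assert (H3 : 0 < / k (lam a / lam b)) by (apply Rinv_0_lt_compat; lra).
    unfold K. apply Rinv_le_contravar. apply Rmult_lt_0_compat; lra.
    apply (Rmult_le_compat_r (lam b)) in H1; [|lra].
    replace ((1 + lam a / lam b) / 2 * lam b) with ((lam a + lam b) / 2) in H1 by (field; lra). lra. }
  assert (HYT : Cre (trace n (mmul n Y T)) = rsum n (fun a => rsum n (fun b => Cre (Cmul (Y a b) (T b a))))).
  { unfold trace, mmul. rewrite Cre_csum. apply rsum_ext; intros a _. apply Cre_csum. }
  assert (Hw : rsum n (fun a => rsum n (fun b => (lam a + lam b) / 2 * Cnorm2 (T b a))) <= 1).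
  { transitivity (rsum n (fun a => lam a / 2 * rsum n (fun b => Cnorm2 (T b a))) +
                  rsum n (fun b => lam b / 2 * rsum n (fun a => Cnorm2 (T b a)))).
    - right.
      rewrite (rsum_ext _ _ (fun a => rsum n (fun b => lam a / 2 * Cnorm2 (T b a)) +
                                      rsum n (fun b => lam b / 2 * Cnorm2 (T b a)))).
      2:{ intros a _. rewrite <- rsum_add. apply rsum_ext; intros; field. }
      rewrite rsum_add. rewrite (rsum_swap n n (fun a b => lam b / 2 * Cnorm2 (T b a))).
      f_equal; apply rsum_ext; intros; rewrite rsum_scal; reflexivity.
    - assert (rsum n (fun a => lam a / 2 * rsum n (fun b => Cnorm2 (T b a))) <= rsum n (fun a => lam a / 2)).
      { apply rsum_le; intros a Ha. pose proof (Hlp a Ha). pose proof (Hcol a Ha). nra. }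
      assert (rsum n (fun b => lam b / 2 * rsum n (fun a => Cnorm2 (T b a))) <= rsum n (fun b => lam b / 2)).
      { apply rsum_le; intros b Hb. pose proof (Hlp b Hb). pose proof (Hrow b Hb). nra. }
      assert (rsum n (fun a => lam a / 2) = 1 / 2).
      { rewrite (rsum_ext _ _ (fun a => / 2 * lam a)) by (intros; field). rewrite rsum_scal, Hls. field. }
      lra. }
  set (chi := rsum n (fun a => rsum n (fun b => K a b * Cnorm2 (Y a b)))).
  set (tn := rsum n (fun i => sqrt (mu i))).
  assert (Htn2 : tn = rsum n (fun a => rsum n (fun b => Cre (Cmul (Y a b) (T b a))))).
  { unfold tn. rewrite <- HR0, Htr. exact HYT. }
  assert (Hmain : forall s, 0 < s -> 2 * tn <= s + chi / s).
  { intros s Hs. rewrite Htn2.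
    transitivity (rsum n (fun a => rsum n (fun b =>
       s * ((lam a + lam b) / 2 * Cnorm2 (T b a)) + / s * (K a b * Cnorm2 (Y a b))))).
    - rewrite <- rsum_scal. apply rsum_le; intros a Ha. rewrite <- rsum_scal. apply rsum_le; intros b Hb.
      pose proof (Hlp a Ha). pose proof (Hlp b Hb). pose proof (HK a b Ha Hb).
      set (w := (lam a + lam b) / 2).
      assert (Hw0 : 0 < w) by (unfold w; lra).
      pose proof (cs_pt (Y a b) (T b a) (s * w) ltac:(apply Rmult_lt_0_compat; lra)).
      assert (Cnorm2 (Y a b) / (s * w) <= / s * (K a b * Cnorm2 (Y a b))).
      { replace (Cnorm2 (Y a b) / (s * w)) with (/ s * (/ w * Cnorm2 (Y a b))) by (field; lra).
        apply Rmult_le_compat_l. left; apply Rinv_0_lt_compat; lra.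
        apply Rmult_le_compat_r. apply Cnorm2_nonneg. auto. }
      nra.
    - rewrite (rsum_ext _ _ (fun a => s * rsum n (fun b => (lam a + lam b) / 2 * Cnorm2 (T b a)) +
                                       / s * rsum n (fun b => K a b * Cnorm2 (Y a b)))).
      2:{ intros a _. rewrite <- !rsum_scal, <- rsum_add. reflexivity. }
      rewrite rsum_add, !rsum_scal. fold chi.
      assert (s * rsum n (fun a => rsum n (fun b => (lam a + lam b) / 2 * Cnorm2 (T b a))) <= s * 1)
        by (apply Rmult_le_compat_l; lra).
      unfold Rdiv. lra. }
  assert (Htn0 : 0 <= tn) by (apply rsum_nonneg; intros; apply sqrt_pos).
  assert (Hchi0 : 0 <= chi).
  { apply rsum_nonneg; intros a Ha; apply rsum_nonneg; intros b Hb.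
    pose proof (HK a b Ha Hb). pose proof (Hlp a Ha). pose proof (Hlp b Hb).
    assert (0 < / ((lam a + lam b) / 2)) by (apply Rinv_0_lt_compat; lra).
    apply Rmult_le_pos. lra. apply Cnorm2_nonneg. }
  rewrite Htn, Hchi. fold tn. fold chi. unfold Rsqr.
  destruct (Rle_lt_dec tn 0).
  - assert (tn = 0) by lra. subst. nra.
  - pose proof (Hmain tn r).
    assert (tn * tn <= chi).
    { assert (tn <= chi / tn) by lra.
      apply (Rmult_le_compat_r tn) in H0; [|lra].
      replace (chi / tn * tn) with chi in H0 by (field; lra). lra. }
    auto.
Qed.
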